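(* Let $M$ be a finite-horizon reward-free MDP, $\Pi\subseteq\Pi_{\mathrm{RNS}}$ and $h\in[H]$. For all $\varepsilon>0$, $$\mathsf{Cov}^M_{h,\varepsilon}\le 1+2\sqrt{\frac{C^M_{1;h}}{\varepsilon}}.$$
   Context: Episodic reward-free MDP $M$ (countable $\mathcal{X}$, actions $\mathcal{A}$, horizon $H$); $\Pi_{\mathrm{RNS}}$ randomized non-stationary policies; $d^{M,\pi}_h(x,a)$ is the layer-$h$ state-action occupancy and $d^{M,p}_h=\mathbb{E}_{\pi\sim p}d^{M,\pi}_h$. Definitions: $\Psi^M_{h,\varepsilon}(p)=\sup_{\pi\in\Pi}\mathbb{E}^{M,\pi}\big[\frac{d^{M,\pi}_h(x_h,a_h)}{d^{M,p}_h(x_h,a_h)+\varepsilon d^{M,\pi}_h(x_h,a_h)}\big]$, $\mathsf{Cov}^M_{h,\varepsilon}=\inf_{p\in\Delta(\Pi)}\Psi^M_{h,\varepsilon}(p)$, and $C^M_{1;h}=\inf_{\mu\in\Delta(\mathcal{X}\times\mathcal{A})}\sup_{\pi\in\Pi}\mathbb{E}^{M,\pi}\big[\frac{d^{M,\pi}_h(x_h,a_h)}{\mu(x_h,a_h)}\big]$. *)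

(* Defs.v *)
From HB Require Import structures.
From mathcomp Require Import all_boot all_order all_algebra.
From mathcomp Require Import all_classical all_reals.
From mathcomp Require Import ereal topology normedtype sequences esum.
From Stdlib Require List.
Set Implicit Arguments. Unset Strict Implicit. Unset Printing Implicit Defensive.
Import Order.TTheory GRing.Theory Num.Theory.
Local Open Scope classical_set_scope.
Local Open Scope ring_scope.

Section Defs.
Variable R : realType.

Definition is_distr (T : countType) (f : T -> R) : Prop :=
  (forall t, 0 <= f t) /\ (\esum_(t in [set: T]) (f t)%:E = 1)%E.

Variables (X : countType) (A : finType).

(* Episodic reward-free MDP with horizon [horizon]; layers are 1..horizon.
   [init] is the distribution of x_1, and [trans h x a] is the distribution
   of x_{h+1} given (x_h, a_h) = (x, a). *)
Record mdp := MDP {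
  horizon : nat;
  init : X -> R;
  trans : nat -> X -> A -> X -> R;
  init_distr : is_distr init;
  trans_distr : forall h x a, is_distr (trans h x a) }.

(* Randomized non-stationary (history-dependent) policy: at layer h, given
   the past history ((x_1,a_1),...,(x_{h-1},a_{h-1})) and the current state x_h,
   [pol h hist x] is a distribution over actions. *)
Record policy := Policy {
  pol : nat -> seq (X * A) -> X -> A -> R;
  pol_distr : forall h hist x, is_distr (pol h hist x) }.

(* probability that the first (size tau) state-action pairs equal tau,
   started at layer h with (chronological) past history hist *)
Fixpoint traj_prob (M : mdp) (pi : policy) (h : nat) (hist tau : seq (X * A))
  : R :=
  match tau with
  | [::] => 1
  | xa :: tau' =>
      (if hist is _ :: _ then
         trans M h.-1 (last xa hist).1 (last xa hist).2 xa.1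
       else init M xa.1)
      * pol pi h hist xa.1 xa.2 * traj_prob M pi h.+1 (rcons hist xa) tau'
  end.

(* layer-h state-action occupancy d^{M,pi}_h(x,a) = P^{M,pi}[(x_h,a_h) = (x,a)] *)
Definition occ (M : mdp) (pi : policy) (h : nat) (xa : X * A) : \bar R :=
  (\esum_(tau in [set tau : seq (X * A) | size tau = h /\ ohead (rev tau) = Some xa])
     (traj_prob M pi 1 [::] tau)%:E)%E.

(* Delta(Pi): finitely supported distributions over a policy class Pi,
   represented as finite lists of (weight, policy) pairs. *)
Definition pdistr (Pi : set policy) : set (seq (R * policy)) :=
  [set p | List.Forall (fun wp => 0 <= wp.1 /\ Pi wp.2) p /\
           \sum_(wp <- p) wp.1 = 1].

Definition occ_mix (M : mdp) (p : seq (R * policy)) (h : nat) (xa : X * A)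
  : \bar R := (\sum_(wp <- p) (wp.1)%:E * occ M wp.2 h xa)%E.

Definition expect_layer (M : mdp) (pi : policy) (h : nat) (g : X * A -> \bar R)
  : \bar R := (\esum_(xa in [set: X * A]) occ M pi h xa * g xa)%E.

Definition Psi (M : mdp) (Pi : set policy) (h : nat) (eps : R)
  (p : seq (R * policy)) : \bar R :=
  ereal_sup [set expect_layer M pi h
               (fun xa => (occ M pi h xa / (occ_mix M p h xa + eps%:E * occ M pi h xa))%E)
            | pi in Pi].

Definition Cov (M : mdp) (Pi : set policy) (h : nat) (eps : R) : \bar R :=
  ereal_inf [set Psi M Pi h eps p | p in pdistr Pi].

Definition C1 (M : mdp) (Pi : set policy) (h : nat) : \bar R :=
  ereal_inf [set ereal_sup [set expect_layer M pi h
                              (fun xa => (occ M pi h xa / (mu xa)%:E)%E)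
                           | pi in Pi]
            | mu in [set mu : X * A -> R | is_distr mu]].

End Defs.

(* Main.v *)
Require Import Defs.
From HB Require Import structures.
From mathcomp Require Import all_boot all_order all_algebra.
From mathcomp Require Import all_classical all_reals.
From mathcomp Require Import ereal topology normedtype sequences esum exp.
From mathcomp Require Import lra ring finmap.
From Stdlib Require List.
Import Order.TTheory GRing.Theory Num.Theory.
Local Open Scope classical_set_scope.
Local Open Scope ring_scope.
Set Implicit Arguments. Unset Strict Implicit. Unset Printing Implicit Defensive.

Section Ln.
Variable R : realType.

Lemma ln_lb (z : R) : -1 < z -> z / (1 + z) <= ln (1 + z).
Proof.
move=> hz.
have h1 : 0 < 1 + z by lra.
have h2 : -1 < - (z / (1 + z)).
  rewrite ltrNl opprK ltr_pdivrMr // mul1r; lra.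
have := le_ln1Dx h2.
have -> : 1 - z / (1 + z) = (1 + z)^-1.
  by field; rewrite gt_eqF.
rewrite lnV ?posrE //; lra.
Qed.

Lemma ln_lb2 (z : R) : -1/2 <= z -> z - 2 * z ^+ 2 <= ln (1 + z).
Proof.
move=> hz.
have h1 : 0 < 1 + z by lra.
have hz' : -1 < z by lra.
apply: le_trans; last exact: ln_lb hz'.
rewrite ler_pdivlMr //.
have : 0 <= z^+2 * (1 + 2 * z) by apply: mulr_ge0; [exact: sqr_ge0| lra].
rewrite expr2 => h; nra.
Qed.

Lemma key_ineq (q u eta R1 : R) : 0 < q -> 0 <= u -> 0 <= eta <= 1/2 ->
  u / q <= R1 - 1 -> 1 <= R1 ->
  eta * (u / q - 1) - 2 * eta^+2 * R1^+2 <= ln ((1 - eta) * q + eta * u) - ln q.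
Proof.
move=> q0 u0 /andP[e0 e1] hr hR.
set r := u / q.
have r0 : 0 <= r by rewrite /r divr_ge0 // ltW.
have E : (1 - eta) * q + eta * u = q * (1 + eta * (r - 1)).
  by rewrite /r; field; rewrite gt_eqF.
have hz : -1/2 <= eta * (r - 1) by nra.
have hpos : 0 < 1 + eta * (r - 1) by lra.
rewrite E lnM ?posrE // addrAC subrr add0r.
apply: le_trans; last exact: ln_lb2 hz.
have : (eta * (r - 1)) ^+ 2 <= eta ^+ 2 * R1 ^+ 2.
  rewrite exprMn; apply: ler_wpM2l; first exact: sqr_ge0.
  have ha : -R1 <= r - 1 by lra.
  have hr2 : r <= R1 - 1 by [].
  have hb : r - 1 <= R1 by lra.
  have hc : 0 <= (R1 - (r - 1)) * (R1 + (r - 1)) by apply: mulr_ge0; lra.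
  rewrite !expr2; nra.
lra.
Qed.
End Ln.

Section Fin.
Variables (R : realType) (T : eqType) (I : Type).

Definition mixr (v : I -> T -> R) (p : seq (R * I)) t :=
  \sum_(wp <- p) wp.1 * v wp.2 t.
Definition pdr (D : set I) (p : seq (R * I)) :=
  List.Forall (fun wp => 0 <= wp.1 /\ D wp.2) p /\ \sum_(wp <- p) wp.1 = 1.
Definition scale (c : R) (p : seq (R * I)) := [seq (c * wp.1, wp.2) | wp <- p].

Lemma mixr_scale v c p t : mixr v (scale c p) t = c * mixr v p t.
Proof.
rewrite /mixr /scale big_map mulr_sumr; apply: eq_bigr => wp _ /=; by rewrite mulrA.
Qed.

Lemma mixr_cat v p1 p2 t : mixr v (p1 ++ p2) t = mixr v p1 t + mixr v p2 t.
Proof. by rewrite /mixr big_cat. Qed.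

Lemma sumw_scale c p : \sum_(wp <- scale c p) wp.1 = c * \sum_(wp <- p) wp.1.
Proof. by rewrite /scale big_map mulr_sumr. Qed.

Lemma Forall_scale (D : set I) c p : 0 <= c ->
  List.Forall (fun wp => 0 <= wp.1 /\ D wp.2) p ->
  List.Forall (fun wp => 0 <= wp.1 /\ D wp.2) (scale c p).
Proof.
move=> c0; elim=> [|wp p' [h1 h2] _ IH] /=; first by constructor.
constructor => //; split => //; exact: mulr_ge0.
Qed.

Lemma Forall_cat (P : R * I -> Prop) p1 p2 :
  List.Forall P p1 -> List.Forall P p2 -> List.Forall P (p1 ++ p2).
Proof. by move=> h1 h2; apply/List.Forall_app. Qed.

Lemma pdr_mix (D : set I) c p1 p2 : 0 <= c <= 1 -> pdr D p1 -> pdr D p2 ->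
  pdr D (scale c p1 ++ scale (1 - c) p2).
Proof.
move=> /andP[c0 c1] [f1 s1] [f2 s2]; split.
  by apply: Forall_cat; apply: Forall_scale => //; rewrite subr_ge0.
by rewrite big_cat /= !sumw_scale s1 s2; ring.
Qed.

Lemma mixr_bnd (D : set I) v B p t : pdr D p ->
  (forall i, D i -> 0 <= v i t <= B) -> 0 <= mixr v p t <= B.
Proof.
move=> [f s] hv; rewrite /mixr; apply/andP; split.
  elim: f {s} => [|wp p' [h1 h2] _ IH]; first by rewrite big_nil.
  by rewrite big_cons addr_ge0 // mulr_ge0 // (andP (hv _ h2)).1.
have -> : B = \sum_(wp <- p) wp.1 * B by rewrite -mulr_suml s mul1r.
elim: f {s} => [|wp p' [h1 h2] _ IH]; first by rewrite !big_nil.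
by rewrite !big_cons lerD // ler_wpM2l // (andP (hv _ h2)).2.
Qed.

Lemma pos_lb (f : T -> R) (s : seq T) : (forall t, t \in s -> 0 < f t) ->
  exists2 c, 0 < c & forall t, t \in s -> c <= f t.
Proof.
elim: s => [|a s IH] h; first by exists 1.
have [c c0 hc] : exists2 c, 0 < c & forall t, t \in s -> c <= f t.
  by apply: IH => t ts; apply: h; rewrite in_cons ts orbT.
exists (Num.min c (f a)); first by rewrite lt_min c0 h // mem_head.
move=> t; rewrite in_cons => /orP[/eqP->|ts]; first by rewrite ge_min lexx orbT.
by rewrite ge_min hc.
Qed.


Lemma finlog (D : set I) (v : I -> T -> R) (B : R) (s : seq T) (w : T -> R)
  (p0 : seq (R * I)) :
  0 <= B -> (forall t, t \in s -> 0 <= w t) -> \sum_(t <- s) w t <= 1 ->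
  (forall i t, D i -> t \in s -> 0 <= v i t <= B) ->
  pdr D p0 -> (forall t, t \in s -> 0 < mixr v p0 t) ->
  exists p, [/\ pdr D p, (forall t, t \in s -> 0 < mixr v p t) &
     forall i, D i -> \sum_(t <- s) w t * (v i t / mixr v p t) <= 4].
Proof.
move=> B0 w0 sw1 vB pd0 q0pos.
have [c0 c0pos hc0] := pos_lb q0pos.
pose fam p' := scale (1/2) p0 ++ scale (1 - 1/2) p'.
have famE p' t : mixr v (fam p') t = 1/2 * mixr v p0 t + 1/2 * mixr v p' t.
  by rewrite mixr_cat !mixr_scale; congr (_ + _ * _); lra.
have hhalf : 0 <= (1/2 : R) <= 1 by apply/andP; split; lra.
have fampd p' : pdr D p' -> pdr D (fam p') by move=> h; apply: pdr_mix.
have mixB p' t : pdr D p' -> t \in s -> 0 <= mixr v p' t <= B.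
  by move=> h ts; apply: (mixr_bnd h) => i Di; exact: vB.
have famlb p' t : pdr D p' -> t \in s -> c0 / 2 <= mixr v (fam p') t <= B.
  move=> h ts; rewrite famE.
  have /andP[a1 a2] := mixB _ _ h ts; have /andP[b1 b2] := mixB _ _ pd0 ts.
  have c1 := hc0 _ ts.
  apply/andP; split; lra.
have famlb' p' t : pdr D p' -> t \in s -> 0 < mixr v (fam p') t.
  move=> h ts; have /andP[h1 _] := famlb _ _ h ts.
  by apply: lt_le_trans h1; lra.
pose Phi p' := \sum_(t <- s) w t * ln (mixr v (fam p') t).
pose E := [set Phi p' | p' in pdr D].
have hsup : has_sup E.
  split; first by exists (Phi p0), p0.
  exists (\sum_(t <- s) w t * B) => _ [p' hp' <-].
  rewrite /Phi big_seq [leRHS]big_seq; apply: ler_sum => t ts.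
  apply: ler_wpM2l; first exact: w0.
  have /andP[h1 h2] := famlb _ _ hp' ts.
  have hpos := famlb' _ _ hp' ts.
  exact: le_trans (ltW (ln_sublinear hpos)) h2.
pose R1 := 2 * B / c0 + 1.
have R1ge1 : 1 <= R1.
  by rewrite /R1 lerDr divr_ge0 // ?mulr_ge0 // ltW.
pose eta := 1 / (4 * R1 ^+ 2).
have R1sq : 1 <= R1 ^+ 2 by rewrite expr2; nra.
have eta0 : 0 < eta by rewrite /eta divr_gt0 //; lra.
have etaE : eta * (4 * R1 ^+ 2) = 1.
  by rewrite /eta; field; rewrite gt_eqF //; lra.
have eta_le : eta <= 1/4 by nra.
have etaR : 2 * eta ^+ 2 * R1 ^+ 2 = eta / 2.
  rewrite expr2; have -> : 2 * (eta * eta) * R1 ^+ 2 = eta * (eta * (4 * R1 ^+ 2)) / 2.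
    by field.
  by rewrite etaE mulr1.
have he2 : 0 < eta / 2 by lra.
have [_ [p' hp' <-] he] := sup_adherent he2 hsup.
exists (fam p'); split.
- exact: fampd.
- by move=> t ts; apply: famlb'.
move=> i Di.
pose p1 : seq (R * I) := [:: (1, i)].
have pd1 : pdr D p1.
  split; first by constructor; [split => //; exact: ler01 | constructor].
  by rewrite big_cons big_nil addr0.
pose p'' := scale (1 - eta) p' ++ scale (1 - (1 - eta)) p1.
have pd'' : pdr D p'' by apply: pdr_mix => //; apply/andP; split; lra.
have hle : Phi p'' <= sup E by apply: sup_upper_bound => //; exists p''.
have mix1 t : mixr v p1 t = v i t by rewrite /mixr big_cons big_nil /= mul1r addr0.
pose q t := mixr v (fam p') t.
pose u t := 1/2 * mixr v p0 t + 1/2 * v i t.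
have q2E t : mixr v (fam p'') t = (1 - eta) * q t + eta * u t.
  by rewrite /q /u !famE mixr_cat !mixr_scale mix1; ring.
have pw t : t \in s -> w t * (eta * (u t / q t - 1) - 2 * eta^+2 * R1^+2)
    <= w t * (ln (mixr v (fam p'') t) - ln (q t)).
  move=> ts; apply: ler_wpM2l; first exact: w0.
  have /andP[ql qu] := famlb _ _ hp' ts.
  have /andP[b1 b2] := mixB _ _ pd0 ts.
  have /andP[v1 v2] := vB _ _ Di ts.
  have qpos : 0 < q t by apply: famlb'.
  rewrite q2E; apply: key_ineq => //.
  - by rewrite /u; lra.
  - by apply/andP; split; lra.
  - rewrite /R1 addrK ler_pdivrMr //.
    have -> : 2 * B / c0 * q t = B * (q t / (c0 / 2)) by field; rewrite gt_eqF.
    have : 1 <= q t / (c0 / 2) by rewrite ler_pdivlMr ?mul1r //; lra.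
    rewrite /u; nra.
have S1 : \sum_(t <- s) w t * (eta * (u t / q t - 1) - 2 * eta^+2 * R1^+2)
    = eta * \sum_(t <- s) w t * (u t / q t)
      - (eta + 2 * eta^+2 * R1^+2) * \sum_(t <- s) w t.
  rewrite !mulr_sumr -sumrB; apply: eq_bigr => t _; ring.
have S2 : \sum_(t <- s) w t * (ln (mixr v (fam p'') t) - ln (q t))
    = Phi p'' - Phi p'.
  by rewrite /Phi -sumrB; apply: eq_bigr => t _; rewrite /q; ring.
have S3 : \sum_(t <- s) w t * (eta * (u t / q t - 1) - 2 * eta^+2 * R1^+2)
    <= \sum_(t <- s) w t * (ln (mixr v (fam p'') t) - ln (q t)).
  by rewrite big_seq [leRHS]big_seq; apply: ler_sum => t ts; apply: pw.
rewrite S1 S2 etaR in S3.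
have sw0 : 0 <= \sum_(t <- s) w t.
  by rewrite big_seq; apply: sumr_ge0 => t ts; apply: w0.
have S4 : \sum_(t <- s) w t * (u t / q t) <= 2.
  have : eta * \sum_(t <- s) w t * (u t / q t) <= 2 * eta by nra.
  by move=> h; rewrite -(ler_pM2l eta0) mulrC; lra.
apply: le_trans (_ : \sum_(t <- s) 2 * (w t * (u t / q t)) <= 4).
  rewrite big_seq [leRHS]big_seq; apply: ler_sum => t ts.
  have /andP[b1 b2] := mixB _ _ pd0 ts.
  have /andP[v1 v2] := vB _ _ Di ts.
  have qpos : 0 < q t by apply: famlb'.
  rewrite -/(q t).
  have h2 : 2 * (u t / q t) = (mixr v p0 t + v i t) / q t.
    by rewrite /u; field; rewrite gt_eqF.
  have h3 : v i t / q t <= 2 * (u t / q t).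
    by rewrite h2 ler_pM2r ?invr_gt0 //; lra.
  have := w0 _ ts; nra.
by rewrite -mulr_sumr; lra.
Qed.

End Fin.

Section RealIneq.
Variable R : realType.

Lemma amgm (x y k : R) : 0 <= x -> 0 <= y -> 0 <= k -> k ^+ 2 <= 4 * (x * y) ->
  k <= x + y.
Proof.
move=> x0 y0 k0 h.
have h1 : k ^+ 2 <= (x + y) ^+ 2.
  apply: le_trans h _; have := sqr_ge0 (x - y); rewrite !expr2; lra.
rewrite -ler_sqr ?nnegrE //; exact: addr_ge0.
Qed.

Lemma ineqS (d q m e a b : R) : 0 <= d -> 0 < q -> 0 < m -> 0 < e ->
  0 <= a -> 0 <= b -> 1 <= 16 * a * b * e ->
  d * (d / (q + e * d)) <= a * (d * (d / m)) + b * (m * (d / q)).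
Proof.
move=> d0 q0 m0 e0 a0 b0 h.
have D0 : 0 < q + e * d by have := mulr_ge0 (ltW e0) d0; lra.
set A' := a * (d * (d / m)); set B' := b * (m * (d / q)).
have A0 : 0 <= A' by rewrite /A' !mulr_ge0 // ?invr_ge0 ltW.
have B0 : 0 <= B' by rewrite /B' !mulr_ge0 // ?invr_ge0 ltW.
rewrite mulrA ler_pdivrMr //.
have P1 : A' * q * (B' * (e * d)) = a * b * e * d ^+ 4.
  by rewrite /A' /B'; field; rewrite !gt_eqF.
have P2 : A' * (e * d) * (B' * q) = a * b * e * d ^+ 4.
  by rewrite /A' /B'; field; rewrite !gt_eqF.
have d4 : 0 <= d ^+ 4 by rewrite exprn_ge0.
have k0 : 0 <= d * d / 2 by rewrite divr_ge0 // mulr_ge0.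
have H1 : d * d / 2 <= A' * q + B' * (e * d).
  apply: amgm => //; first exact: mulr_ge0 A0 (ltW q0).
    exact: mulr_ge0 B0 (mulr_ge0 (ltW e0) d0).
  rewrite P1 (_ : (d * d / 2) ^+ 2 = d ^+ 4 / 4); last first.
    by field.
  have : d ^+ 4 <= 16 * a * b * e * d ^+ 4 by rewrite ler_peMl.
  lra.
have H2 : d * d / 2 <= A' * (e * d) + B' * q.
  apply: amgm => //; first exact: mulr_ge0 A0 (mulr_ge0 (ltW e0) d0).
    exact: mulr_ge0 B0 (ltW q0).
  rewrite P2 (_ : (d * d / 2) ^+ 2 = d ^+ 4 / 4); last first.
    by field.
  have : d ^+ 4 <= 16 * a * b * e * d ^+ 4 by rewrite ler_peMl.
  lra.
have -> : (A' + B') * (q + e * d) = (A' * q + B' * (e * d)) + (A' * (e * d) + B' * q)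
  by ring.
lra.
Qed.

Lemma ineqT (d q m e a c : R) : 0 <= d -> 0 <= q -> 0 < m -> 0 < e ->
  0 <= a -> 0 <= c -> 1 <= 4 * a * c * e ^+ 2 ->
  d * (d / (q + e * d)) <= a * (d * (d / m)) + c * m.
Proof.
move=> d0 q0 m0 e0 a0 c0 h.
have [->|dp] := eqVneq d 0.
  by rewrite !mul0r mulr0 add0r mulr_ge0 // ltW.
have dpos : 0 < d by rewrite lt_neqAle eq_sym dp.
have D0 : 0 < q + e * d by have := mulr_gt0 e0 dpos; lra.
have H1 : d * (d / (q + e * d)) <= d / e.
  rewrite mulrA ler_pdivrMr // mulrAC ler_pdivlMr //.
  have := mulr_ge0 d0 q0; nra.
apply: le_trans H1 _.
have X0 : 0 <= a * (d * (d / m)).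
  by apply: mulr_ge0 => //; apply: mulr_ge0 => //; apply: divr_ge0 => //; exact: ltW.
apply: amgm => //; first exact: mulr_ge0 c0 (ltW m0).
  exact: divr_ge0 d0 (ltW e0).
have -> : a * (d * (d / m)) * (c * m) = a * c * d ^+ 2.
  by rewrite expr2; field; rewrite gt_eqF.
have -> : (d / e) ^+ 2 = d ^+ 2 / e ^+ 2 by rewrite expr_div_n.
rewrite ler_pdivrMr ?exprn_gt0 //.
have d2 : 0 <= d ^+ 2 by exact: sqr_ge0.
nra.
Qed.
End RealIneq.

Section EHelp.
Variables (R : realType) (T : choiceType).

Lemma esum_scale_le (S : set T) (k : R) (a : T -> R) : 0 <= k -> (forall t, 0 <= a t) ->
  (\esum_(t in S) (k * a t)%:E <= k%:E * \esum_(t in S) (a t)%:E)%E.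
Proof.
move=> k0 a0; apply: ge_ereal_sup => _ [F [finF FS] <-].
under eq_fsbigr do rewrite EFinM.
rewrite -ge0_mule_fsumr; last by move=> i; rewrite lee_fin.
apply: lee_wpmul2l; first by rewrite lee_fin.
by apply: ereal_sup_ubound; exists F.
Qed.

Lemma esum_single (S : set T) (a : T -> \bar R) t : (forall t, 0 <= a t)%E -> S t ->
  (a t <= \esum_(i in S) a i)%E.
Proof.
move=> a0 St; apply: esum_ge; exists [set t].
  by split; [exact: finite_set1 | move=> x ->].
by rewrite fsbig_set1.
Qed.

Lemma fin_facts (d : \bar R) (m C : R) : (0 <= d)%E -> 0 <= m ->
  (d * (d / m%:E) <= C%:E)%E ->
  exists r, [/\ d = r%:E, 0 <= r, (m = 0 -> r = 0) & r * (r / m) <= C].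
Proof.
case: d => [r| |] //.
- rewrite lee_fin => r0 m0 h; exists r; split => //.
    move=> m00; move: h; rewrite m00 inver eqxx.
    have [->//|rn0] := eqVneq r 0.
    have rp : 0 < r by rewrite lt_neqAle eq_sym rn0.
    by rewrite mulry gtr0_sg // mul1e mulry gtr0_sg // mul1e.
  move: h; rewrite inver; case: eqP => [m00|_]; last by rewrite -!EFinM lee_fin.
  rewrite m00 invr0 !mulr0; have [->|rn0] := eqVneq r 0; first by rewrite mul0e.
  have rp : 0 < r by rewrite lt_neqAle eq_sym rn0.
  by rewrite mulry gtr0_sg // mul1e mulry gtr0_sg // mul1e.
- move=> _ m0; rewrite inver; case: eqP => [_|mn0]; first by rewrite mulyy.
  have mp : 0 < m by rewrite lt_neqAle eq_sym; apply/andP; split => //; apply/eqP.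
  by rewrite mulyr gtr0_sg ?invr_gt0 // mul1e mulyy.
Qed.

Lemma EFin_ratio (r z : R) : (z = 0 -> r = 0) ->
  (r%:E * (r%:E / z%:E) = (r * (r / z))%:E)%E.
Proof.
move=> h; rewrite inver; case: eqP => [z0|_]; last by rewrite -!EFinM.
by rewrite (h z0) !mul0e mul0r.
Qed.

Lemma tail_choose (mu : T -> R) (tau : R) : (forall t, 0 <= mu t) ->
  \esum_(t in [set: T]) (mu t)%:E = 1%E -> 0 < tau ->
  exists X : set T, [/\ finite_set X, \sum_(t <- fset_set X) mu t <= 1 &
    (\esum_(t in [set: T] `&` ~` X) (mu t)%:E <= tau%:E)%E].
Proof.
move=> mu0 mu1 tau0.
have : ((1 - tau)%:E < \esum_(t in [set: T]) (mu t)%:E)%E by rewrite mu1 lte_fin; lra.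
move=> /ereal_sup_gt [_ [X [finX _] <-] hX]; exists X.
have sp := esumID X [set: T] (fun t => (mu t)%:E) (fun t _ => mu0 t).
rewrite mu1 setTI esum_fset // in sp; last by move=> i _; rewrite lee_fin.
rewrite fsbig_finite // sumEFin in sp hX.
rewrite lte_fin in hX.
have g0 : (0 <= \esum_(t in [set: T] `&` ~` X) (mu t)%:E)%E.
  by apply: esum_ge0 => t _; rewrite lee_fin.
move: sp g0; case: (\esum_(t in _) _) => [rb| |] //= sp g0.
  rewrite lee_fin in g0; move: sp; rewrite -EFinD => -[] sp.
  split => //; rewrite ?lee_fin; lra.
Qed.

End EHelp.

Section Core.
Variables (R : realType) (T : choiceType) (I : Type).

Lemma le_sum_mem (G : T -> R) (s : seq T) t : (forall x, 0 <= G x) ->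
  t \in s -> G t <= \sum_(x <- s) G x.
Proof.
move=> G0; elim: s => [|a s IH] //; rewrite in_cons big_cons => /orP[/eqP->|ts].
  by rewrite lerDl sumr_ge0.
by rewrite (le_trans (IH ts)) // lerDr.
Qed.

Lemma sum_const_seq (k : R) (l : seq I) : \sum_(x <- l) k = (size l)%:R * k.
Proof.
elim: l => [|a l IH]; first by rewrite big_nil mul0r.
by rewrite big_cons IH /= -addn1 natrD; ring.
Qed.

Lemma Forall_map (P : R * I -> Prop) (f : I -> R * I) (l : seq I) (Q : I -> Prop) :
  (forall x, Q x -> P (f x)) -> List.Forall Q l -> List.Forall P (map f l).
Proof. by move=> h; elim=> [|x l' hx _ IH] /=; constructor => //; apply: h. Qed.


Lemma core (D : set I) (d : I -> T -> \bar R) (mu : T -> R) (C eps th : R) (i0 : I) :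
  D i0 -> (forall i t, 0 <= d i t)%E -> (forall t, 0 <= mu t) ->
  \esum_(t in [set: T]) (mu t)%:E = 1%E ->
  0 < C -> 0 < eps -> 0 < th ->
  (forall i, D i -> \esum_(t in [set: T]) (d i t * (d i t / (mu t)%:E)) <= C%:E)%E ->
  exists p, pdr D p /\ forall i, D i ->
    (\esum_(t in [set: T]) (d i t * (d i t /
        (\sum_(wp <- p) (wp.1)%:E * d wp.2 t + eps%:E * d i t)))
      <= (Num.sqrt (C * eps) / eps + th)%:E)%E.
Proof.
move=> Di0 d0 mu0 mu1 C0 e0 th0 hC.
have facts i t : D i -> exists r, [/\ d i t = r%:E, 0 <= r, (mu t = 0 -> r = 0)
    & r * (r / mu t) <= C].
  move=> Di; apply: fin_facts => //; apply: le_trans (hC i Di).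
  apply: esum_single => // x; apply: mule_ge0 => //; apply: mule_ge0 => //.
  by rewrite inve_ge0 lee_fin.
pose dr i t := fine (d i t).
have dE i t : D i -> d i t = (dr i t)%:E.
  by move=> Di; have [r [E _ _ _]] := facts i t Di; rewrite /dr E.
have dr0 i t : D i -> 0 <= dr i t.
  by move=> Di; have [r [E h _ _]] := facts i t Di; rewrite /dr E.
have drmu i t : D i -> mu t = 0 -> dr i t = 0.
  by move=> Di; have [r [E _ h _]] := facts i t Di; rewrite /dr E.
have drC i t : D i -> dr i t * (dr i t / mu t) <= C.
  by move=> Di; have [r [E _ _ h]] := facts i t Di; rewrite /dr E.
have mu1' t : mu t <= 1.
  have := @esum_single R T [set: T] (fun t => (mu t)%:E) t.
  by rewrite mu1 lee_fin; apply => // x; rewrite lee_fin.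
have drB i t : D i -> dr i t <= C + 1.
  move=> Di; have h0 := dr0 i t Di.
  have [m0|mn0] := eqVneq (mu t) 0; first by rewrite (drmu i t Di m0); lra.
  have mp : 0 < mu t by rewrite lt_neqAle eq_sym mn0 mu0.
  have := drC i t Di; rewrite mulrA ler_pdivrMr // => h.
  have := mu1' t; nra.
pose s0 := Num.sqrt (C * eps).
have Ce0 : 0 < C * eps by rewrite mulr_gt0.
have s0p : 0 < s0 by rewrite sqrtr_gt0.
have s0sq : s0 ^+ 2 = C * eps by rewrite sqr_sqrtr // ltW.
pose al := 1 / (2 * s0). pose b := s0 / (8 * eps). pose c := s0 / (2 * eps ^+ 2).
have al0 : 0 < al by rewrite /al divr_gt0 // mulr_gt0.
have b0 : 0 < b by rewrite /b divr_gt0 // mulr_gt0.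
have c0 : 0 < c by rewrite /c divr_gt0 // mulr_gt0 // exprn_gt0.
have hab : 1 <= 16 * al * b * eps.
  suff -> : 16 * al * b * eps = 1 by [].
  by rewrite /al /b; field; rewrite !gt_eqF.
have hac : 1 <= 4 * al * c * eps ^+ 2.
  suff -> : 4 * al * c * eps ^+ 2 = 1 by [].
  by rewrite /al /c; field; rewrite !gt_eqF.
pose tau := th / c.
have tau0 : 0 < tau by rewrite divr_gt0.
have [X [finX sX tX]] := tail_choose mu0 mu1 tau0.
pose s := (fset_set X : seq T).
have memsX t : (t \in s) = (t \in X) by rewrite in_fset_set.
pose good t := `[< exists i, D i /\ 0 < dr i t >].
pose s' := [seq t <- s | good t].
pose wit t := if pselect (exists i, D i /\ 0 < dr i t) is left h then projT1 (cid h)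
  else i0.
have witD t : D (wit t).
  by rewrite /wit; case: pselect => [h|_] //; case: (cid h) => /= j [].
have witp t : good t -> 0 < dr (wit t) t.
  rewrite /good /wit => /asboolP h; case: pselect => [h'|//].
  by case: (cid h') => /= j [].
pose k := ((size s').+1)%:R^-1 : R.
have k0 : 0 < k by rewrite /k invr_gt0 ltr0n.
pose p0 := [seq (k, j) | j <- i0 :: map wit s'].
have FD : forall l : seq T, List.Forall D (map wit l).
  by elim => [|x l IH]; constructor.
have pd0 : pdr D p0.
  split.
    apply: (Forall_map (Q := D)); last by constructor.
    by move=> x Dx /=; split => //; exact: ltW.
  by rewrite big_map sum_const_seq /= size_map /k mulfV.
have q0pos t : t \in s' -> 0 < mixr dr p0 t.
  move=> ts'; rewrite /mixr big_map big_cons big_map /=.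
  have gt : good t by move: ts'; rewrite mem_filter => /andP[].
  have := @le_sum_mem (fun x => k * dr (wit x) t) s' t.
  move=> /(_ (fun x => mulr_ge0 (ltW k0) (dr0 _ _ (witD x)))) /(_ ts') h.
  have := mulr_gt0 k0 (witp t gt); have := mulr_ge0 (ltW k0) (dr0 i0 t Di0); lra.
have w0 t : t \in s' -> 0 <= mu t by [].
have sw1 : \sum_(t <- s') mu t <= 1.
  rewrite big_filter; apply: le_trans sX; rewrite [leLHS]big_mkcond.
  by apply: ler_sum => t _; case: ifP.
have vB i t : D i -> t \in s' -> 0 <= dr i t <= C + 1.
  by move=> Di _; rewrite dr0 // drB.
have B0 : 0 <= C + 1 by lra.
have [p [pdp qpos hq]] := finlog B0 w0 sw1 vB pd0 q0pos.
exists p; split => // i Di.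
pose q t := mixr dr p t.
have mixE t : (\sum_(wp <- p) (wp.1)%:E * d wp.2 t = (q t)%:E)%E.
  rewrite /q /mixr; case: pdp => F _; elim: F => [|wp l [_ Dw] _ IH].
    by rewrite !big_nil.
  by rewrite !big_cons IH (dE _ _ Dw) -EFinM -EFinD.
have q0 t : 0 <= q t.
  have := @mixr_bnd R T I D dr (C + 1) p t pdp.
  by case/(_ _)/andP => // j Dj; rewrite dr0 // drB.
pose fr t := dr i t * (dr i t / (q t + eps * dr i t)).
pose xr t := dr i t * (dr i t / mu t).
have FE t : (d i t * (d i t / (\sum_(wp <- p) (wp.1)%:E * d wp.2 t + eps%:E * d i t))
    = (fr t)%:E)%E.
  rewrite mixE dE // -EFinM -EFinD EFin_ratio // => z0.
  have := q0 t; have := dr0 i t Di; nra.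
have XE t : (d i t * (d i t / (mu t)%:E) = (xr t)%:E)%E.
  by rewrite dE // EFin_ratio //; exact: drmu.
have xr0 t : 0 <= xr t.
  by rewrite /xr mulr_ge0 ?divr_ge0 ?dr0.
pose g t := if t \in s' then b * (mu t * (dr i t / q t))
            else if t \in s then 0 else c * mu t.
have g0 t : 0 <= g t.
  rewrite /g; case: ifP => _.
    apply: mulr_ge0; first exact: ltW.
    by apply: mulr_ge0 => //; apply: divr_ge0; [exact: dr0 | exact: q0].
  by case: ifP => _ //; apply: mulr_ge0; [exact: ltW | exact: mu0].
have pw t : fr t <= al * xr t + g t.
  have [m0|mn0] := eqVneq (mu t) 0.
    have -> : fr t = 0 by rewrite /fr (drmu i t Di m0) mul0r.
    by apply: addr_ge0; [apply: mulr_ge0; [exact: ltW | exact: xr0] | exact: g0].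
  have mp : 0 < mu t by rewrite lt_neqAle eq_sym mn0 mu0.
  rewrite /g; case: ifP => ts'.
    exact: ineqS (dr0 i t Di) (qpos t ts') mp e0 (ltW al0) (ltW b0) hab.
  case: ifP => ts.
    have ng : ~~ good t by move: ts'; rewrite mem_filter ts andbT => ->.
    have dz : dr i t = 0.
      apply/eqP; rewrite eq_le dr0 // andbT leNgt; apply/negP => hd.
      by move/negP: ng; apply; apply/asboolP; exists i; split.
    have -> : fr t = 0 by rewrite /fr dz mul0r.
    by rewrite addr0; apply: mulr_ge0; [exact: ltW | exact: xr0].
  exact: ineqT (dr0 i t Di) (q0 t) mp e0 (ltW al0) (ltW c0) hac.
have E1 : (\esum_(t in [set: T]) (fr t)%:E <=
    \esum_(t in [set: T]) (al * xr t)%:E + \esum_(t in [set: T]) (g t)%:E)%E.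
  rewrite -esumD; last 2 first.
  - by move=> t _; rewrite lee_fin; apply: mulr_ge0; [exact: ltW | exact: xr0].
  - by move=> t _; rewrite lee_fin.
  by apply: le_esum => t _; rewrite -EFinD lee_fin.
have E2 : (\esum_(t in [set: T]) (al * xr t)%:E <= (al * C)%:E)%E.
  apply: le_trans (esum_scale_le _ (ltW al0) xr0) _.
  rewrite (EFinM al C) lee_pmul2l // ?lte_fin //.
  rewrite -(eq_esum (fun t _ => XE t)); exact: hC.
have E3 : (\esum_(t in [set: T]) (g t)%:E <= (4 * b + th)%:E)%E.
  rewrite (esumID [set` s']); last by move=> t _; rewrite lee_fin.
  rewrite EFinD; apply: leeD.
    rewrite setTI esum_fset ?finite_seq //; last by move=> t _; rewrite lee_fin.
    rewrite -fsbig_seq; last by rewrite filter_uniq // fset_uniq.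
    rewrite sumEFin lee_fin.
    rewrite big_seq (eq_bigr (fun t => b * (mu t * (dr i t / q t)))); last first.
      by move=> t ts'; rewrite /g ts'.
    rewrite -big_seq -mulr_sumr.
    have hq' : \sum_(t <- s') mu t * (dr i t / q t) <= 4 := hq i Di.
    by rewrite mulrC ler_wpM2r // ltW.
  rewrite esum_mkcond; apply: le_trans (_ : \esum_(t in [set: T])
      (if t \in [set: T] `&` ~` X then (c * mu t)%:E else 0%E) <= _)%E.
    apply: le_esum => t _; rewrite !in_setI !in_setT !in_setC /=.
    have cm0 : (0 <= (c * mu t)%:E)%E by rewrite lee_fin mulr_ge0 // ltW.
    case: (boolP (t \in [set` s'])) => hs /=; first by case: ifP.
    have hs' : (t \in s') = false by apply/negbTE; move: hs; rewrite mem_setE.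
    rewrite /g hs' memsX; by case: (t \in X).
  rewrite -esum_mkcond; apply: le_trans (esum_scale_le _ (ltW c0) mu0) _.
  have -> : th = c * tau by rewrite /tau; field; rewrite gt_eqF.
  by rewrite (EFinM c tau) lee_pmul2l // ?lte_fin.
rewrite (eq_esum (fun t _ => FE t)).
apply: le_trans E1 _; apply: le_trans (leeD E2 E3) _.
rewrite -EFinD lee_fin.
have -> : al * C = s0 ^+ 2 / (2 * s0 * eps).
  by rewrite s0sq /al; field; rewrite !gt_eqF.
rewrite -/s0; suff : s0 ^+ 2 / (2 * s0 * eps) + 4 * b = s0 / eps by lra.
by rewrite /b; field; rewrite !gt_eqF.
Qed.

End Core.

Unset Implicit Arguments.

Lemma traj_prob_ge0 (R : realType) (X : countType) (A : finType)
  (M : mdp R X A) (pi : policy R X A) (tau : seq (X * A)) :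
  forall h hist, 0 <= traj_prob M pi h hist tau.
Proof.
elim: tau => [|xa tau IH] h hist /=; first exact: ler01.
apply: mulr_ge0; last exact: IH.
apply: mulr_ge0; last by case: (pol_distr pi h hist xa.1) => + _; apply.
case: hist => [|y hist'].
  by case: (init_distr M) => + _; apply.
by case: (trans_distr M h.-1 (last xa (y :: hist')).1 (last xa (y :: hist')).2) => + _; apply.
Qed.

Lemma occ_ge0 (R : realType) (X : countType) (A : finType)
  (M : mdp R X A) (pi : policy R X A) h xa : (0 <= occ M pi h xa)%E.
Proof.
by apply: esum_ge0 => tau _; rewrite lee_fin traj_prob_ge0.
Qed.

Theorem proposition7p1 (R : realType) (X : countType) (A : finType)
  (M : mdp R X A) (Pi : set (policy R X A)) (h : nat) (eps : R) :
  Pi !=set0 -> (1 <= h <= horizon M)%N -> 0 < eps ->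
  (Cov M Pi h eps <= 1 + 2%:E * sqrte (C1 M Pi h * (eps^-1)%:E))%E.
Proof.
move=> [pi0 Hpi0] _ e0.
have c1ge0 : (0 <= C1 M Pi h)%E.
  apply: le_ereal_inf_tmp => _ [mu hmu <-].
  apply: le_trans; last by apply: ereal_sup_ubound; exists pi0.
  apply: esum_ge0 => xa _; apply: mule_ge0; first exact: (@occ_ge0 R X A).
  apply: mule_ge0; first exact: (@occ_ge0 R X A).
  by rewrite inve_ge0 lee_fin; case: hmu => + _; apply.
move: c1ge0; case E: (C1 M Pi h) => [r| |] //; last first.
  by move=> _; rewrite mulyr gtr0_sg ?invr_gt0 // mul1e /= mulry gtr0_sg // mul1e addey // leey.
rewrite lee_fin => r0.
pose C := r + eps / 4.
have C0 : 0 < C by rewrite /C; lra.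
have e4 : 0 < eps / 4 by lra.
have fin : C1 M Pi h \is a fin_num by rewrite E.
have [_ [mu hmu <-] hlt] := lb_ereal_inf_adherent e4 fin.
rewrite -[ereal_inf _]/(C1 M Pi h) E -EFinD in hlt.
have hC : forall pi, Pi pi -> (\esum_(t in [set: X * A])
    (occ M pi h t * (occ M pi h t / (mu t)%:E)) <= C%:E)%E.
  move=> pi Hpi; apply/ltW; apply: le_lt_trans hlt.
  by apply: ereal_sup_ubound; exists pi.
have th0 : (0:R) < 1/2 by lra.
case: hmu => mu0 mu1.
have [p [pdp hp]] := @core R (X * A)%type (policy R X A) Pi
  (fun pi t => occ M pi h t) mu C eps (1/2) pi0 Hpi0
  (fun i t => @occ_ge0 R X A M i h t) mu0 mu1 C0 e0 th0 hC.
apply: le_trans (_ : Psi M Pi h eps p <= _)%E.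
  by apply: ereal_inf_lbound; exists p.
apply: le_trans (_ : (Num.sqrt (C * eps) / eps + 1/2)%:E <= _)%E.
  apply: ge_ereal_sup => _ [pi Hpi <-]; exact: hp.
have -> : (1 + 2%:E * sqrte (r%:E * (eps^-1)%:E) =
  (1 + 2 * Num.sqrt (r * eps^-1))%:E)%E by [].
rewrite lee_fin.
have re0 : 0 <= r * eps^-1 by rewrite mulr_ge0 // invr_ge0 ltW.
set y := Num.sqrt (r * eps^-1).
have y0 : 0 <= y by rewrite sqrtr_ge0.
have y2 : y ^+ 2 = r * eps^-1 by rewrite sqr_sqrtr.
have Ce0 : 0 <= C * eps by rewrite mulr_ge0 // ltW.
set z := Num.sqrt (C * eps).
have z0 : 0 <= z by rewrite sqrtr_ge0.
have z2 : z ^+ 2 = C * eps by rewrite sqr_sqrtr.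
have w0 : 0 <= eps * (y + 1/2) by rewrite mulr_ge0 // ?ltW //; lra.
have hw : z ^+ 2 <= (eps * (y + 1/2)) ^+ 2.
  have -> : (eps * (y + 1/2)) ^+ 2 = eps ^+ 2 * y ^+ 2 + eps ^+ 2 * y + eps ^+ 2 / 4.
    by rewrite !expr2; field.
  rewrite y2 z2 /C.
  have -> : eps ^+ 2 * (r * eps^-1) = eps * r by field; rewrite gt_eqF.
  have : 0 <= eps ^+ 2 * y by rewrite mulr_ge0 // sqr_ge0.
  rewrite !expr2; lra.
have hz : z <= eps * (y + 1/2).
  by rewrite -ler_sqr ?nnegrE.
have : z / eps <= y + 1/2 by rewrite ler_pdivrMr // mulrC.
lra.
Qed.
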